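(* Let $G=(V,E)$ be a finite simple graph on $n$ vertices with adjacency matrix $A$ having eigenvalues $\lambda_1\ge\cdots\ge\lambda_n$, let $k\ge1$, and let $p\in\mathbb{R}_k[x]$ be such that $p(\lambda_1)>p(\lambda_i)$ for all $i\in\{2,\dots,n\}$. Let $W(p):=\max_{u\in V}(p(A))_{uu}$ and $\lambda(p):=\min_{2\le i\le n}p(\lambda_i)$. Then $$\chi_{kq}(G)\ \ge\ \frac{p(\lambda_1)-\lambda(p)}{W(p)-\lambda(p)}.$$
   Context: $\mathbb{R}_k[x]$ denotes the real polynomials of degree at most $k$. $\mathrm{dist}$ is the graph distance in $G$, $[c]=\{1,\dots,c\}$. A quantum $k$-distance $c$-coloring of $G$ is a collection of orthogonal projectors $\{P_{v,h} : v\in V, h\in[c]\}$ in $\mathbb{C}^{d\times d}$ (some $d\ge1$) with $\sum_{h}P_{v,h}=I_d$ for each $v$ and $P_{v,h}P_{w,h}=0$ for all distinct $v,w$ with $\mathrm{dist}(v,w)\le k$ and all $h$. $\chi_{kq}(G)$ is the smallest $c$ admitting such a coloring for some $d>0$; equivalently the quantum chromatic number of the $k$-th power graph $G^k$. *)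

(* Defs.v *)
From HB Require Import structures.
From mathcomp Require Import all_boot all_order all_algebra.
From mathcomp Require Import sesquilinear spectral.
From mathcomp Require Import complex.
From mathcomp Require Import reals.

Set Implicit Arguments.
Unset Strict Implicit.
Unset Printing Implicit Defensive.

Import Order.TTheory GRing.Theory Num.Theory.
Local Open Scope ring_scope.

Definition simple_graph (n : nat) (G : rel 'I_n) : Prop :=
  symmetric G /\ irreflexive G.

Definition adjmx (R : pzRingType) (n : nat) (G : rel 'I_n) : 'M[R]_n :=
  \matrix_(i, j) (G i j)%:R.

Definition dist_le (n : nat) (G : rel 'I_n) (k : nat) (v w : 'I_n) : Prop :=
  exists s : seq 'I_n, [/\ (size s <= k)%N, path G v s & last v s = w].

Definition orth_proj (C : numClosedFieldType) (d : nat) (P : 'M[C]_d) : Prop :=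
  P *m P = P /\ (P ^t* )%sesqui = P.

Definition quantum_kdist_coloring (C : numClosedFieldType) (n : nat)
    (G : rel 'I_n) (k c d : nat) (P : 'I_n -> 'I_c -> 'M[C]_d) : Prop :=
  [/\ forall v h, orth_proj (P v h),
      forall v, \sum_(h < c) P v h = 1%:M
    & forall v w h, v != w -> dist_le G k v w -> P v h *m P w h = 0].

(* G admits a quantum k-distance c-coloring over C = R[i] in some dimension
   d > 0;  chi_kq(G) is the least such c. *)
Definition has_qkcoloring (R : rcfType) (n : nat) (G : rel 'I_n) (k c : nat)
    : Prop :=
  exists (d : nat) (P : 'I_n -> 'I_c -> 'M[R[i]]_d),
    (0 < d)%N /\ quantum_kdist_coloring G k P.

Definition Wp (R : realDomainType) (n : nat) (A : 'M[R]_n.+1) (p : {poly R}) : R :=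
  \big[Num.max/(horner_mx A p) ord0 ord0]_(u < n.+1) (horner_mx A p) u u.

(* lambda(p) = min_{2 <= i <= n} p(lambda_i), eigenvalues indexed by 'I_n.+1
   with lam ord0 = lambda_1 (the default ord_max belongs to the range when
   n >= 1). *)
Definition lamp (R : realDomainType) (n : nat) (lam : 'I_n.+1 -> R)
    (p : {poly R}) : R :=
  \big[Num.min/p.[lam ord_max]]_(i < n.+1 | i != ord0) p.[lam i].

(* Main.v *)
Require Import Defs.
From HB Require Import structures.
From mathcomp Require Import all_boot all_order all_algebra.
From mathcomp Require Import sesquilinear spectral complex reals.
From mathcomp Require Import ring.
Import Order.TTheory GRing.Theory Num.Theory.
Local Open Scope ring_scope.
Set Implicit Arguments.
Unset Strict Implicit.
Unset Printing Implicit Defensive.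

Lemma adj_pow_walk (R : realType) n (G : rel 'I_n.+1) i (v w : 'I_n.+1) :
  ((adjmx R G) ^+ i) v w != 0 ->
  exists s : seq 'I_n.+1, [/\ size s = i, path G v s & last v s = w].
Proof.
elim: i v w => [|i IH] v w.
  rewrite expr0 mxE; have [->|] := eqVneq v w; last by rewrite mulr0n eqxx.
  by move=> _; exists [::].
rewrite exprSr mxE => nz.
have [u Hu] : exists u, ((adjmx R G) ^+ i) v u * (adjmx R G) u w != 0.
  apply/existsP; apply: contraR nz => /existsPn H; apply/eqP.
  by apply: big1 => u _; apply/eqP; move: (H u); rewrite negbK.
move: Hu; rewrite mulf_eq0 negb_or => /andP[H1 H2].
have Guw : G u w by move: H2; rewrite mxE; case: (G u w); rewrite ?eqxx.
have [s [Hs Hp Hl]] := IH _ _ H1.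
by exists (rcons s w); rewrite size_rcons rcons_path last_rcons Hs Hp Hl Guw.
Qed.

Lemma horner_adj_dist (R : realType) n (G : rel 'I_n.+1) k (p : {poly R})
  (v w : 'I_n.+1) : (size p <= k.+1)%N ->
  (horner_mx (adjmx R G) p) v w != 0 -> dist_le G k v w.
Proof.
move=> sp; rewrite -[p in horner_mx _ p]coefK poly_def rmorph_sum summxE => nz.
have [i Hi] : exists i : 'I_(size p),
    (horner_mx (adjmx R G) (p`_i *: 'X^i)) v w != 0.
  apply/existsP; apply: contraR nz => /existsPn H; apply/eqP.
  by apply: big1 => u _; apply/eqP; move: (H u); rewrite negbK.
move: Hi; rewrite linearZ /= rmorphXn /= horner_mx_X mxE mulf_eq0 negb_or.
case/andP=> _ /adj_pow_walk [s [Hs Hp Hl]].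
exists s; split => //; rewrite Hs.
by have := ltn_ord i; move=> /leq_trans/(_ sp).
Qed.

Lemma eig_horner (R : fieldType) n (A : 'M[R]_n.+1) (x : 'rV_n.+1) a
  (p : {poly R}) : x *m A = a *: x -> x *m horner_mx A p = p.[a] *: x.
Proof.
move=> HA; elim/poly_ind: p => [|p c IH].
  by rewrite rmorph0 mulmx0 horner0 scale0r.
rewrite rmorphD rmorphM /= horner_mx_X horner_mx_C hornerMXaddC.
rewrite -mulmxE mulmxDr mulmxA IH -scalemxAl HA mul_mx_scalar.
by rewrite scalerA scalerDl.
Qed.

Section Bf.
Variable C : numClosedFieldType.
Variables (m d : nat) (M : 'M[C]_m).
Definition Bf (U V : 'M[C]_(m, d)) : C := \tr ((U ^t*)%sesqui *m M *m V).

Lemma ctr_sum I (r : seq I) (F : I -> 'M[C]_(m, d)) :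
  ((\sum_(i <- r) F i) ^t*)%sesqui = \sum_(i <- r) ((F i) ^t*)%sesqui.
Proof.
by apply/matrixP => i j; rewrite !(mxE, summxE) rmorph_sum; apply: eq_bigr => h _; rewrite !mxE.
Qed.

Lemma ctrB (U V : 'M[C]_(m, d)) :
  ((U - V) ^t*)%sesqui = (U ^t*)%sesqui - (V ^t*)%sesqui.
Proof. by apply/matrixP => i j; rewrite !mxE rmorphB. Qed.

Lemma Bf_suml I (r : seq I) (F : I -> 'M[C]_(m, d)) V :
  Bf (\sum_(i <- r) F i) V = \sum_(i <- r) Bf (F i) V.
Proof.
rewrite /Bf ctr_sum mulmx_suml mulmx_suml linear_sum /=. by [].
Qed.

Lemma Bf_sumr I (r : seq I) (F : I -> 'M[C]_(m, d)) U :
  Bf U (\sum_(i <- r) F i) = \sum_(i <- r) Bf U (F i).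
Proof. by rewrite /Bf mulmx_sumr linear_sum. Qed.

Lemma Bf_subl U V W : Bf (U - V) W = Bf U W - Bf V W.
Proof. by rewrite /Bf ctrB !mulmxBl linearB. Qed.

Lemma Bf_subr U V W : Bf W (U - V) = Bf W U - Bf W V.
Proof. by rewrite /Bf mulmxBr linearB. Qed.

Lemma BfE U V : Bf U V =
  \sum_t \sum_w (\sum_v (U v t)^* * M v w) * V w t.
Proof.
rewrite /Bf /mxtrace; apply: eq_bigr => t _; rewrite mxE.
apply: eq_bigr => w _; rewrite !mxE; congr (_ * _).
by apply: eq_bigr => v _; rewrite !mxE.
Qed.

Lemma pinching c (F : 'I_c -> 'M[C]_(m, d)) :
  (forall Z, 0 <= Bf Z Z) ->
  Bf (\sum_h F h) (\sum_h F h) <= c%:R * \sum_h Bf (F h) (F h).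
Proof.
move=> psd.
have H : 0 <= \sum_h \sum_h' Bf (F h - F h') (F h - F h').
  by apply: sumr_ge0 => h _; apply: sumr_ge0 => h' _; apply: psd.
set S := \sum_h Bf (F h) (F h).
set T := Bf (\sum_h F h) (\sum_h F h).
have e1 : forall h, \sum_h' Bf (F h - F h') (F h - F h') =
    Bf (F h) (F h) *+ c - Bf (F h) (\sum_h F h) - (Bf (\sum_h F h) (F h) - S).
  move=> h; under eq_bigr => h' _ do rewrite Bf_subl !Bf_subr.
  by rewrite !sumrB sumr_const card_ord Bf_sumr Bf_suml.
rewrite (eq_bigr _ (fun h _ => e1 h)) !sumrB in H.
have e2 : \sum_(i < c) Bf (F i) (\sum_h F h) = T by rewrite /T Bf_suml.
have e3 : \sum_(i < c) Bf (\sum_h F h) (F i) = T by rewrite /T Bf_sumr.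
rewrite e2 e3 sumrMnl sumr_const card_ord -/S in H.
rewrite -subr_ge0.
have -> : c%:R * S - T = (S *+ c - T - (T - S *+ c)) / 2%:R.
  rewrite -mulr_natl -[S *+ c]mulr_natl.
  apply: (@mulIf _ 2%:R); first by rewrite pnatr_eq0.
  rewrite divfK ?pnatr_eq0 //. 
  by rewrite mulr1 mulrBl mulr_natr !mulr2n opprB; ring.
by apply: divr_ge0 => //; rewrite ler0n.
Qed.

Lemma Bf_psd (P : 'M[C]_m) (E : 'rV[C]_m) :
  (forall j, 0 <= E 0 j) -> M = (P ^t*)%sesqui *m diag_mx E *m P ->
  forall Z, 0 <= Bf Z Z.
Proof.
move=> E0 HM Z; rewrite /Bf HM.
have -> : (Z ^t*)%sesqui *m ((P ^t*)%sesqui *m diag_mx E *m P) *m Z =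
   ((P *m Z) ^t*)%sesqui *m diag_mx E *m (P *m Z).
  by rewrite trmx_mul map_mxM !mulmxA.
rewrite /mxtrace; apply: sumr_ge0 => t _; rewrite mxE.
apply: sumr_ge0 => k _; rewrite mul_mx_diag !mxE.
rewrite mulrAC; apply: mulr_ge0 => //.
by rewrite mulrC mul_conjC_ge0.
Qed.
End Bf.

Section RC. Variable R : realType. Variable x : R.
Lemma conj_rc : Num.conj (x%:C%C : R[i]) = x%:C%C.
Proof. apply/eqP; rewrite eq_complex /= oppr0 !eqxx //. Qed.
End RC.

Unset Implicit Arguments.
Set Strict Implicit.

Theorem theorem5p2 (R : realType) (n : nat) (G : rel 'I_n.+1)
    (lam : 'I_n.+1 -> R) (k : nat) (p : {poly R}) :
  (0 < n)%N ->
  simple_graph G ->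
  char_poly (adjmx R G) = \prod_(i < n.+1) ('X - (lam i)%:P) ->
  (forall i j : 'I_n.+1, (i <= j)%N -> lam j <= lam i) ->
  (1 <= k)%N ->
  (size p <= k.+1)%N ->
  (forall i : 'I_n.+1, i != ord0 -> p.[lam i] < p.[lam ord0]) ->
  forall c : nat, has_qkcoloring R G k c ->
    (p.[lam ord0] - lamp lam p) / (Wp (adjmx R G) p - lamp lam p) <= c%:R.
Proof.
move=> n0 [Gsym Girr] hchar hlam k1 sp hp c [d [Pc [d0 [Hproj Hsum Hcol]]]].
set A := adjmx R G; set pA := horner_mx A p; set L := lamp lam p.
set W := Wp A p; set l0 := lam ord0.
have hL : forall i, i != ord0 -> L <= p.[lam i].
  by move=> i hi; rewrite /L /lamp; apply: bigmin_le_cond.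
have hL0 : L < p.[l0].
  rewrite /L /lamp; elim/big_ind: _ => //.
  - apply: hp; apply/eqP => /(congr1 val) /= h; by rewrite h in n0.
  - by move=> x y hx hy; rewrite gt_min hx.
have hLi : forall i, L <= p.[lam i].
  move=> i; have [->|/hL //] := eqVneq i ord0; exact: ltW.
have hW : forall u, pA u u <= W.
  by move=> u; rewrite /W /Wp; exact: (le_bigmax (horner_mx A p ord0 ord0) (fun u => horner_mx A p u u) u).
have : root (char_poly A) l0.
  rewrite hchar /root horner_prod; apply/prodf_eq0.
  by exists ord0 => //; rewrite hornerXsubC subrr.
rewrite -eigenvalue_root_char => /eigenvalueP [x hx x0].
set mu := p.[l0] - L.
set Mr := pA - L%:M.
have hxM : x *m Mr = mu *: x.
  by rewrite mulmxBr (eig_horner _ hx) mul_mx_scalar scalerBl.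
pose rc := real_complex R.
pose Ac := map_mx rc A.
have hAc : (Ac ^t*)%sesqui = Ac.
  by apply/matrixP => i j; rewrite !mxE /rc conj_rc Gsym.
have Anorm : Ac \is normalmx by apply/normalmxP; rewrite hAc.
set Pu := spectralmx Ac; set D := spectral_diag Ac.
have hspec : Ac = invmx Pu *m diag_mx D *m Pu by apply/orthomx_spectralP.
have Puu : Pu \in unitmx by apply: spectral_unit.
have Pinv : invmx Pu = (Pu ^t*)%sesqui by apply/invmx_unitary/spectral_unitarymx.
have hD : forall j, exists i, D 0 j = (lam i)%:C%C.
  move=> j.
  have : eigenvalue Ac (D 0 j).
    apply/eigenvalueP; exists (row j Pu).
      rewrite -row_mul {1}hspec !mulmxA mulmxV // mul1mx mul_diag_mx.
      by apply/rowP => t; rewrite !mxE.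
    apply/eqP => hr.
    have : row j (Pu *m invmx Pu) = 0 by rewrite row_mul hr mul0mx.
    rewrite mulmxV // => /rowP /(_ j); rewrite !mxE eqxx /=.
    by move/eqP; rewrite oner_eq0.
  rewrite eigenvalue_root_char -map_char_poly hchar rmorph_prod /root horner_prod.
  case/prodf_eq0 => i _ /=; rewrite map_polyXsubC hornerXsubC subr_eq0 => /eqP ->.
  by exists i.
pose pc := map_poly rc p.
pose Mc := map_mx rc Mr.
pose E := \row_j (pc.[D 0 j] - (L%:C)%C).
have hE : forall j, 0 <= E 0 j.
  move=> j; rewrite mxE; have [i ->] := hD j.
  rewrite /pc horner_map -rmorphB /= ler0c subr_ge0; exact: hLi.
have hMc : Mc = (Pu ^t*)%sesqui *m diag_mx E *m Pu.
  rewrite /Mc /Mr map_mxB map_scalar_mx /pA map_horner_mx -/Ac hspec.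
  rewrite horner_mx_uconjC // horner_mx_diag -Pinv.
  have -> : (rc L)%:M = invmx Pu *m (rc L)%:M *m Pu.
    by rewrite mul_mx_scalar -scalemxAl mulVmx // scalemx1.
  rewrite -mulmxBl -mulmxBr; congr (_ *m _ *m _).
  apply/matrixP => i j; rewrite !mxE.
  by case: eqP => [->|]; rewrite ?mulr1n ?mulr0n ?subr0.
have psd : forall Z : 'M_(n.+1, d), 0 <= Bf Mc Z Z := Bf_psd hE hMc.
pose j0 := Ordinal d0.
pose xc := fun v => rc (x 0 v).
pose a := fun h : 'I_c => \matrix_(v, t) (xc v * Pc v h t j0) : 'M[R[i]]_(n.+1, d).
pose Y := \matrix_(v, t) (xc v * (t == j0)%:R) : 'M[R[i]]_(n.+1, d).
have hY : \sum_h a h = Y.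
  apply/matrixP => v t; rewrite summxE !mxE.
  under eq_bigr => h _ do rewrite mxE.
  rewrite -mulr_sumr; congr (_ * _).
  by rewrite -summxE Hsum mxE.
have pin := pinching a psd; rewrite hY in pin.
have hYY : Bf Mc Y Y = rc (mu * \sum_v x 0 v * x 0 v).
  rewrite BfE (bigD1 j0) //= [X in _ + X]big1 ?addr0; last first.
    move=> t tj; apply: big1 => w _; by rewrite mxE (negbTE tj) mulr0 mulr0.
  rewrite /rc rmorphM rmorph_sum mulr_sumr; apply: eq_bigr => w _.
  have -> : \sum_v (Y v j0)^* * Mc v w = rc ((x *m Mr) 0 w).
    rewrite /rc mxE rmorph_sum; apply: eq_bigr => v _.
    by rewrite !mxE eqxx mulr1 /xc /rc conj_rc rmorphM.
  by rewrite hxM !mxE eqxx mulr1 /xc /rc !rmorphM mulrA.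
have key : forall h v w,
    \sum_t (a h v t)^* * Mc v w * a h w t =
    xc v * Mc v w * xc w * (Pc v h *m Pc w h) j0 j0.
  move=> h v w; have [_ Hh] := Hproj v h.
  rewrite [X in _ = _ * X]mxE mulr_sumr; apply: eq_bigr => t _.
  have E1 : Pc v h j0 t = (Pc v h t j0)^* by rewrite -{1}Hh !mxE.
  rewrite E1 !mxE rmorphM /xc /rc /= conj_rc.
  rewrite !mulrA; congr (_ * _); rewrite -!mulrA; congr (_ * _).
  by rewrite mulrC -mulrA.
have hAh : forall h, Bf Mc (a h) (a h) =
    \sum_v rc (x 0 v * x 0 v * Mr v v) * Pc v h j0 j0.
  move=> h; rewrite BfE.
  under eq_bigr => t _ do under eq_bigr => w _ do rewrite mulr_suml.
  rewrite exchange_big /=.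
  under eq_bigr => w _ do rewrite exchange_big /=.
  rewrite exchange_big /=; apply: eq_bigr => v _.
  rewrite (bigD1 v) //= [X in _ + X]big1 ?addr0; last first.
    move=> w wv; rewrite key.
    have [hz|hnz] := eqVneq (pA v w) 0.
      have -> : Mc v w = 0.
        by rewrite /Mc /Mr !mxE hz eq_sym (negbTE wv) mulr0n subr0 /rc rmorph0.
      by rewrite mulr0 mul0r mul0r.
    rewrite Hcol ?mxE ?mulr0 //; first by rewrite eq_sym.
    exact: horner_adj_dist hnz.
  rewrite key; have [Hh _] := Hproj v h; rewrite Hh.
  by rewrite /xc /Mc /rc mxE !rmorphM; ring.
have hAA : \sum_h Bf Mc (a h) (a h) = rc (\sum_v x 0 v * x 0 v * Mr v v).
  under eq_bigr => h _ do rewrite hAh.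
  rewrite exchange_big /rc rmorph_sum; apply: eq_bigr => v _.
  rewrite -mulr_sumr -summxE Hsum.
  have -> : (1%:M : 'M[R[i]]_d) j0 j0 = 1 by rewrite mxE eqxx.
  by rewrite mulr1.
rewrite hYY hAA /rc in pin.
set X := \sum_v x 0 v * x 0 v in pin.
set S2 := \sum_v x 0 v * x 0 v * Mr v v in pin.
have pinR : mu * X <= c%:R * S2.
  by move: pin; rewrite -(rmorph_nat (real_complex R) c) -rmorphM lecR.
have sq0 : forall v, 0 <= x 0 v * x 0 v by move=> v; rewrite -expr2 sqr_ge0.
have hS2 : S2 <= (W - L) * X.
  rewrite /S2 /X mulr_sumr; apply: ler_sum => v _.
  rewrite [(W - L) * _]mulrC; apply: ler_wpM2l; first exact: sq0.
  by rewrite /Mr !mxE eqxx mulr1n lerD2r hW.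
have hX : 0 < X.
  rewrite lt0r; apply/andP; split; last by apply: sumr_ge0 => v _; exact: sq0.
  apply/eqP => /(psumr_eq0P (fun v _ => sq0 v)) H.
  move/negP: x0; apply; apply/eqP/rowP => v; rewrite mxE.
  by move: (H v isT) => /eqP; rewrite mulf_eq0 orbb => /eqP.
have hmu : 0 < mu by rewrite subr_gt0.
have hc : mu * X <= c%:R * (W - L) * X.
  rewrite -mulrA; apply: le_trans pinR _; apply: ler_wpM2l => //; exact: ler0n.
rewrite ler_pM2r // in hc.
have hWL : 0 < W - L.
  rewrite ltNge; apply/negP => hle.
  have : c%:R * (W - L) <= 0 by rewrite mulr_ge0_le0 // ler0n.
  by move/(lt_le_trans (lt_le_trans hmu hc)); rewrite ltxx.
by rewrite ler_pdivrMr.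
Qed.
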